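(* For all $\alpha\ge1$ and $a,b\ge0$, $$|\gamma(\alpha,a)-\gamma(\alpha,b)|\ge|a-b|(ab)^{\frac{\alpha-1}{2}}e^{-\frac{a+b}{2}},$$ where $\gamma(\alpha,x)=\int_0^x t^{\alpha-1}e^{-t}\,dt$ is the lower incomplete gamma function. *)

(* Defs.v *)
From Stdlib Require Import Reals.
Open Scope R_scope.

(* Real power x^s for x >= 0, with the convention 0^0 = 1 and 0^s = 0 for s <> 0
   (Stdlib's Rpower is only meaningful for x > 0). *)
Definition rpow (x s : R) : R :=
  if Req_EM_T x 0 then (if Req_EM_T s 0 then 1 else 0) else Rpower x s.

Definition gamma_integrand (alpha : R) (t : R) : R :=
  rpow t (alpha - 1) * exp (- t).

(* Main.v *)
Require Import Defs.
From Stdlib Require Import Reals Lra.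
From Coquelicot Require Import Coquelicot.
Open Scope R_scope.

Lemma amgm_exp (x y : R) : exp x + exp y >= 2 * exp ((x + y) / 2).
Proof.
  assert (H1 : exp x = exp (x/2) * exp (x/2)) by (rewrite <- exp_plus; f_equal; lra).
  assert (H2 : exp y = exp (y/2) * exp (y/2)) by (rewrite <- exp_plus; f_equal; lra).
  assert (H3 : exp ((x+y)/2) = exp (x/2) * exp (y/2)) by (rewrite <- exp_plus; f_equal; lra).
  rewrite H1, H2, H3. pose proof (Rle_0_sqr (exp (x/2) - exp (y/2))). unfold Rsqr in *. lra.
Qed.

Lemma exp_mono x y : x <= y -> exp x <= exp y.
Proof. intros H; destruct (Rle_lt_or_eq_dec _ _ H); [left; apply exp_increasing; auto| subst; lra]. Qed.

Lemma rpow_nonneg x s : 0 <= rpow x s.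
Proof.
  unfold rpow. destruct Req_EM_T; [destruct Req_EM_T; lra|].
  unfold Rpower. left; apply exp_pos.
Qed.

Lemma rpow_pos_eq x s : 0 < x -> rpow x s = exp (s * ln x).
Proof. intros. unfold rpow. destruct Req_EM_T; [lra|reflexivity]. Qed.

Lemma rpow_0 x : rpow x 0 = 1.
Proof.
  unfold rpow. destruct Req_EM_T; [destruct Req_EM_T; lra|].
  unfold Rpower. rewrite Rmult_0_l. apply exp_0.
Qed.

Lemma pointwise alpha a b t : 1 <= alpha -> 0 <= a -> a <= t <= b ->
  gamma_integrand alpha t + gamma_integrand alpha (a + b - t)
  >= 2 * (rpow (a * b) ((alpha - 1) / 2) * exp (- ((a + b) / 2))).
Proof.
  intros Hal Ha Ht. unfold gamma_integrand.
  destruct (Req_dec alpha 1) as [E|E].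
  - subst alpha. replace (1-1) with 0 by ring. replace ((0)/2) with 0 by field.
    rewrite !rpow_0, !Rmult_1_l.
    replace (- ((a+b)/2)) with ((- t + - (a + b - t))/2) by field.
    apply amgm_exp.
  - destruct (Req_dec a 0) as [Ea|Ea].
    + subst a. rewrite Rmult_0_l. unfold rpow at 3.
      destruct Req_EM_T; [|lra]. destruct Req_EM_T; [lra|].
      pose proof (rpow_nonneg t (alpha-1)). pose proof (rpow_nonneg (0+b-t) (alpha-1)).
      pose proof (exp_pos (-t)). pose proof (exp_pos (-(0+b-t))). nra.
    + assert (Hp : 0 < a) by lra.
      rewrite (rpow_pos_eq t) by lra. rewrite (rpow_pos_eq (a+b-t)) by lra.
      rewrite (rpow_pos_eq (a*b)) by nra.
      rewrite <- !exp_plus.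
      apply Rge_trans with (2 * exp (((alpha - 1) * ln t + - t + ((alpha - 1) * ln (a + b - t) + - (a + b - t)))/2)).
      * apply amgm_exp.
      * apply Rmult_ge_compat_l; [lra|]. apply Rle_ge.
        assert (L : ln (a*b) <= ln (t * (a+b-t))).
        { apply ln_le; nra. }
        rewrite ln_mult in L by lra.
        rewrite ln_mult in L by nra.
        rewrite ln_mult by lra.
        apply exp_mono.
        assert (0 <= (alpha - 1) * ((ln t + ln (a+b-t)) - (ln a + ln b))) by (apply Rmult_le_pos; lra).
        lra.
Qed.

Lemma opp_scal_m1 (r : R) : @opp R_AbelianGroup (@scal R_Ring R_ModuleSpace (-1) r) = r.
Proof. change (- (-1 * r) = r). ring. Qed.

Lemma key alpha a b : 1 <= alpha -> 0 <= a -> a <= b ->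
  ex_RInt (gamma_integrand alpha) a b ->
  RInt (gamma_integrand alpha) a b >=
  (b - a) * (rpow (a * b) ((alpha - 1) / 2) * exp (- ((a + b) / 2))).
Proof.
  intros Hal Ha Hab Hex.
  set (f := gamma_integrand alpha) in *.
  set (G := rpow (a * b) ((alpha - 1) / 2) * exp (- ((a + b) / 2))).
  assert (Hex' : ex_RInt f (-1 * a + (a + b)) (-1 * b + (a + b))).
  { replace (-1 * a + (a + b)) with b by ring. replace (-1 * b + (a + b)) with a by ring.
    apply ex_RInt_swap; exact Hex. }
  pose proof (RInt_comp_lin f (-1) (a+b) a b Hex') as E1.
  pose proof (ex_RInt_comp_lin f (-1) (a+b) a b Hex') as X1.
  replace (-1 * a + (a + b)) with b in E1 by ring.
  replace (-1 * b + (a + b)) with a in E1 by ring.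
  rewrite <- (opp_RInt_swap f a b Hex) in E1.
  set (g := fun y => scal (-1) (f (-1 * y + (a + b)))) in *.
  assert (Eg : RInt (fun y => f (a + b - y)) a b = RInt f a b).
  { rewrite <- (opp_opp (RInt f a b)). rewrite <- E1.
    rewrite <- RInt_opp by exact X1.
    apply RInt_ext. intros x _. unfold g. rewrite opp_scal_m1. replace (-1 * x + (a + b)) with (a + b - x) by ring. reflexivity. }
  assert (Xg : ex_RInt (fun y => f (a + b - y)) a b).
  { eapply (ex_RInt_ext (fun y => opp (g y))).
    - intros x _. unfold g. rewrite opp_scal_m1. replace (-1 * x + (a + b)) with (a + b - x) by ring. reflexivity.
    - exact (ex_RInt_opp g a b X1). }
  assert (Hs : RInt (fun y => f y + f (a + b - y)) a b >= RInt (fun _ => 2 * G) a b).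
  { apply Rle_ge. apply RInt_le.
    - exact Hab.
    - apply ex_RInt_const.
    - exact (@ex_RInt_plus R_NormedModule f (fun y => f (a + b - y)) a b Hex Xg).
    - intros x Hx. unfold f, G. apply Rge_le. apply pointwise; lra. }
  assert (E2 : RInt (fun y => f y + f (a + b - y)) a b = RInt f a b + RInt (fun y => f (a + b - y)) a b)
    by exact (@RInt_plus R_CompleteNormedModule f (fun y => f (a + b - y)) a b Hex Xg).
  rewrite E2 in Hs. rewrite Eg, RInt_const in Hs.
  change (RInt f a b + RInt f a b >= (b - a) * (2 * G)) in Hs.
  unfold G in *. lra.
Qed.

Lemma main_le (alpha a b : R)
  (halpha : 1 <= alpha) (ha : 0 <= a) (hab : a <= b)
  (pra : Riemann_integrable (gamma_integrand alpha) 0 a)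
  (prb : Riemann_integrable (gamma_integrand alpha) 0 b) :
  Rabs (RiemannInt pra - RiemannInt prb)
    >= Rabs (a - b) * rpow (a * b) ((alpha - 1) / 2) * exp (- ((a + b) / 2)).
Proof.
  rewrite <- (RInt_Reals _ _ _ pra), <- (RInt_Reals _ _ _ prb).
  pose proof (ex_RInt_Reals_1 _ _ _ pra) as Ea.
  pose proof (ex_RInt_Reals_1 _ _ _ prb) as Eb.
  assert (Eab : ex_RInt (gamma_integrand alpha) a b).
  { exact (@ex_RInt_Chasles_2 R_CompleteNormedModule _ 0 a b (conj ha hab) Eb). }
  assert (C : RInt (gamma_integrand alpha) 0 a + RInt (gamma_integrand alpha) a b
              = RInt (gamma_integrand alpha) 0 b)
    by exact (@RInt_Chasles R_CompleteNormedModule _ 0 a b Ea Eab).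
  pose proof (key alpha a b halpha ha hab Eab) as K.
  pose proof (rpow_nonneg (a * b) ((alpha - 1) / 2)) as P1.
  pose proof (exp_pos (- ((a + b) / 2))) as P2.
  assert (P3 : 0 <= rpow (a * b) ((alpha - 1) / 2) * exp (- ((a + b) / 2))) by (apply Rmult_le_pos; lra).
  assert (P4 : 0 <= (b - a) * (rpow (a * b) ((alpha - 1) / 2) * exp (- ((a + b) / 2)))) by (apply Rmult_le_pos; lra).
  rewrite <- C.
  replace (RInt (gamma_integrand alpha) 0 a - (RInt (gamma_integrand alpha) 0 a + RInt (gamma_integrand alpha) a b))
    with (- RInt (gamma_integrand alpha) a b) by ring.
  rewrite Rabs_Ropp, Rabs_pos_eq by lra.
  rewrite Rabs_left1 by lra. rewrite Rmult_assoc. lra.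
Qed.

Theorem mainTheorem14 (alpha a b : R)
  (halpha : 1 <= alpha) (ha : 0 <= a) (hb : 0 <= b)
  (pra : Riemann_integrable (gamma_integrand alpha) 0 a)
  (prb : Riemann_integrable (gamma_integrand alpha) 0 b) :
  Rabs (RiemannInt pra - RiemannInt prb)
    >= Rabs (a - b) * rpow (a * b) ((alpha - 1) / 2) * exp (- ((a + b) / 2)).
Proof.
  destruct (Rle_dec a b) as [H|H].
  - apply main_le; assumption.
  - rewrite Rabs_minus_sym, (Rabs_minus_sym a b), (Rmult_comm a b), (Rplus_comm a b).
    apply main_le; lra.
Qed.
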